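(* Let $w\in[0,\infty)^n$ and $c\in(0,\infty)^n$. Let $x,y,z$ be tuples of vertices such that the concatenations $xy$ and $xyz$ are both searches in $\mathcal G$, and suppose $\rho(z)\ge\rho(y)$. Then $$J^+(xy;w,c)\ge\min\{J^+(x;w,c),\,J^+(xyz;w,c)\}.$$
   Context: $\mathcal G=([n],\mathcal E)$ is a finite directed acyclic graph on $[n]$. A search is a tuple $s=(s_1,\dots,s_k)$ of distinct vertices ($0\le k\le n$) such that every in-neighbor of each $s_i$ belongs to $\{s_1,\dots,s_{i-1}\}$. For tuples $a,b$ with disjoint entries, $ab$ denotes their concatenation. For $w\in[0,\infty)^n$, $c\in(0,\infty)^n$ and a tuple $s$ of distinct vertices: $J(s;w,c)=\big(\sum_{i=1}^{|s|}c_{s_i}(1-\sum_{j<i}w_{s_j})\big)/\big(\sum_{i=1}^{|s|}w_{s_i}\big)$ if the denominator is positive and $+\infty$ otherwise (in particular for the empty tuple); $J^+=\max\{0,J\}$ with $\max\{0,+\infty\}=+\infty$. The density of a tuple (or set) is $\rho(A)=\sum_{i\in A}w_i/\sum_{i\in A}c_i$ for nonempty $A$ (taken over its underlying set) and $\rho(\emptyset)=0$. *)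

(* Defs.v *)
From HB Require Import structures.
From mathcomp Require Import all_boot all_order all_algebra.
Set Implicit Arguments. Unset Strict Implicit. Unset Printing Implicit Defensive.
Import Order.TTheory GRing.Theory Num.Theory.
Local Open Scope ring_scope.

(* The directed graph on [n] (vertices 'I_n) with edge relation E : E u v
   means u -> v, i.e. u is an in-neighbour of v. *)
Definition acyclic n (E : rel 'I_n) : Prop :=
  forall u v, E u v -> ~~ connect E v u.

Definition is_search n (E : rel 'I_n) (s : seq 'I_n) : Prop :=
  uniq s /\
  forall (a : seq 'I_n) (v : 'I_n) (b : seq 'I_n), s = a ++ v :: b ->
    forall u, E u v -> u \in a.

(* Extended values in [0,+oo]-style : None stands for +oo. *)
Definition ext_le (R : realFieldType) (a b : option R) : bool :=
  match a, b with
  | _, None => true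
  | None, Some _ => false
  | Some a, Some b => a <= b
  end.

Definition ext_min (R : realFieldType) (a b : option R) : option R :=
  match a, b with
  | None, b => b
  | a, None => a
  | Some a, Some b => Some (Order.min a b)
  end.

Fixpoint Jnum_from (R : realFieldType) n (w c : 'I_n -> R) (acc : R)
    (s : seq 'I_n) : R :=
  match s with
  | [::] => 0
  | v :: t => c v * (1 - acc) + Jnum_from w c (acc + w v) t
  end.

(* numerator of J: sum_{i} c_{s_i} (1 - sum_{j<i} w_{s_j}) *)
Definition Jnum (R : realFieldType) n (w c : 'I_n -> R) (s : seq 'I_n) : R :=
  Jnum_from w c 0 s.

Definition J (R : realFieldType) n (w c : 'I_n -> R) (s : seq 'I_n) : option R :=
  let D := \sum_(v <- s) w v in
  if 0 < D then Some (Jnum w c s / D) else None.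

Definition Jplus (R : realFieldType) n (w c : 'I_n -> R) (s : seq 'I_n) : option R :=
  match J w c s with
  | Some r => Some (Order.max 0 r)
  | None => None
  end.

Definition rho (R : realFieldType) n (w c : 'I_n -> R) (s : seq 'I_n) : R :=
  if s is [::] then 0
  else (\sum_(v <- undup s) w v) / (\sum_(v <- undup s) c v).

(* Main.v *)
Require Import Defs.
From HB Require Import structures.
From mathcomp Require Import all_boot all_order all_algebra.
From mathcomp Require Import ring lra.
Import Order.TTheory GRing.Theory Num.Theory.
Local Open Scope ring_scope.
Set Implicit Arguments. Unset Strict Implicit.

Section Aux.
Variables (R : realFieldType) (n : nat) (w c : 'I_n -> R).
Hypothesis hw : forall i, 0 <= w i.
Hypothesis hc : forall i, 0 < c i.

Definition Ws (s : seq 'I_n) := \sum_(v <- s) w v.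
Definition Cs (s : seq 'I_n) := \sum_(v <- s) c v.
Definition Ns (s : seq 'I_n) := Jnum_from w c 0 s.

Lemma Ws_cat a b : Ws (a ++ b) = Ws a + Ws b.
Proof. by rewrite /Ws big_cat. Qed.
Lemma Cs_cat a b : Cs (a ++ b) = Cs a + Cs b.
Proof. by rewrite /Cs big_cat. Qed.
Lemma Ws_ge0 s : 0 <= Ws s.
Proof. by rewrite /Ws; apply: sumr_ge0 => i _. Qed.
Lemma Cs_ge0 s : 0 <= Cs s.
Proof. by rewrite /Cs; apply: sumr_ge0 => i _; apply: ltW. Qed.
Lemma Cs_gt0 s : s <> [::] -> 0 < Cs s.
Proof.
case: s => [//|v t] _; rewrite /Cs big_cons.
by apply: ltr_wpDr; [apply: Cs_ge0|].
Qed.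
Lemma Ws_nil : Ws [::] = 0. Proof. by rewrite /Ws big_nil. Qed.
Lemma Cs_nil : Cs [::] = 0. Proof. by rewrite /Cs big_nil. Qed.

Lemma JF_shift acc s : Jnum_from w c acc s = Ns s - acc * Cs s.
Proof.
rewrite /Ns /Cs; elim: s acc => [|v t IH] acc /=; first by rewrite big_nil; ring.
by rewrite big_cons IH (IH (0 + w v)); ring.
Qed.

Lemma JF_cat acc a b :
  Jnum_from w c acc (a ++ b) = Jnum_from w c acc a + Jnum_from w c (acc + Ws a) b.
Proof.
rewrite /Ws; elim: a acc => [|v t IH] acc /=; first by rewrite big_nil addr0 add0r.
by rewrite IH big_cons addrA addrA.
Qed.

Lemma Ns_cat a b : Ns (a ++ b) = Ns a + Ns b - Ws a * Cs b.
Proof. by rewrite /Ns JF_cat add0r (JF_shift (Ws a)) -/(Ns b) -/(Ns a) addrA. Qed.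

Lemma Ns_bounds s : Cs s * (1 - Ws s) <= Ns s /\ Ns s <= Cs s.
Proof.
elim: s => [|v t [IH1 IH2]]; first by rewrite /Ns /= Cs_nil; split; lra.
have -> : Ns (v :: t) = c v + Ns t - w v * Cs t.
  by rewrite /Ns /= (JF_shift (0 + w v)) -/(Ns t); ring.
have -> : Cs (v :: t) = c v + Cs t by rewrite /Cs big_cons.
have -> : Ws (v :: t) = w v + Ws t by rewrite /Ws big_cons.
have h1 := hw v; have h2 := hc v; have h3 := Ws_ge0 t; have h4 := Cs_ge0 t.
have h5 : 0 <= c v * (w v + Ws t) by apply: mulr_ge0; lra.
have h6 : 0 <= w v * Cs t by apply: mulr_ge0.
split; nra.
Qed.

Lemma Ws_gt0_ne s : 0 < Ws s -> s <> [::].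
Proof. by move=> h e; move: h; rewrite e Ws_nil ltxx. Qed.

End Aux.

Lemma cross (R : realFieldType) (x y p q : R) : 0 < p -> 0 < q ->
  x * q <= y * p -> x / p <= y / q.
Proof.
move=> hp hq h; rewrite ler_pdivrMr // mulrAC ler_pdivlMr //.
Qed.

Lemma core (R : realFieldType) (Wx Wy Wz Nx Ny Nz Cx Cy Cz : R) :
  0 <= Wx -> 0 <= Wy -> 0 <= Wz -> 0 <= Cx -> 0 <= Cy -> 0 <= Cz ->
  Cy * (1 - Wy) <= Ny -> Nz <= Cz -> Cx * (1 - Wx) <= Nx ->
  Wy * Cz <= Wz * Cy -> (0 < Wy -> 0 < Cy) -> 0 < Wx + Wy ->
  (Nx + Ny - Wx * Cy + Nz - (Wx + Wy) * Cz) / (Wx + Wy + Wz)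
     <= Num.max 0 ((Nx + Ny - Wx * Cy) / (Wx + Wy))
  \/ (0 < Wx /\ Nx / Wx <= (Nx + Ny - Wx * Cy) / (Wx + Wy)).
Proof.
move=> hWx hWy hWz hCx hCy hCz hNy hNz hNx hrho hCy' hW.
set W := Wx + Wy. set Nxy := Nx + Ny - Wx * Cy.
have eW : W = Wx + Wy by []. have eN : Nxy = Nx + Ny - Wx * Cy by [].
clearbody W Nxy.
have hW3 : 0 < W + Wz by lra.
have eNxyz : Nxy + Nz - W * Cz = Nxy + (Nz - W * Cz) by ring.
rewrite eNxyz.
have hD : Nz - W * Cz <= Cz * (1 - W) by rewrite mulrBr mulr1 (mulrC Cz); lra.
case: (lerP (1 - W) 0) => h1.
  left; case: (lerP Nxy 0) => hN.
    apply: (@le_trans _ _ 0); last by rewrite le_max lexx.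
    apply: mulr_le0_ge0; last by rewrite invr_ge0; lra.
    have : Cz * (1 - W) <= 0 by nra.
    lra.
  apply: (@le_trans _ _ (Nxy / W)); last by rewrite le_max lexx orbT.
  apply: cross; [lra|lra|].
  have h2' : Nz - W * Cz <= 0 by nra.
  have h2 : (Nz - W * Cz) * W <= 0 by apply: mulr_le0_ge0; lra.
  have h3 : 0 <= Nxy * Wz by nra.
  nra.
have hNxy : 0 <= Nxy.
  have : 0 <= Cx * (1 - Wx) by apply: mulr_ge0; lra.
  have : Cy * (1 - W) <= Ny - Wx * Cy by nra.
  have : 0 <= Cy * (1 - W) by apply: mulr_ge0; lra.
  lra.
case: (lerP ((Nxy + (Nz - W * Cz)) * W) (Nxy * (W + Wz))) => hc.
  left; apply: (@le_trans _ _ (Nxy / W)); last by rewrite le_max lexx orbT.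
  apply: cross; [lra|lra|lra].
right.
have hlt : Nxy * Wz < Cz * (1 - W) * W.
  have : (Nz - W * Cz) * W <= Cz * (1 - W) * W by nra.
  nra.
have hCz0 : 0 < Cz.
  rewrite lt0r hCz andbT; apply/eqP => e; move: hlt; rewrite e.
  nra.
set Ny' := Ny - Wx * Cy. have eN' : Ny' = Ny - Wx * Cy by []. clearbody Ny'.
have hNy' : Cy * (1 - W) <= Ny' by nra.
have k1 : Cz * (Nxy * Wy) <= Nxy * (Wz * Cy) by nra.
have k2 : Nxy * Wz * Cy <= Cy * (Cz * (1 - W) * W) by nra.
have k3 : Cy * Cz * (1 - W) * W <= Cz * Ny' * W.
  have : 0 <= Cz * W by nra.
  nra.
have k4 : Nxy * Wy <= Ny' * W.
  have : Cz * (Nxy * Wy) <= Cz * (Ny' * W) by nra.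
  by rewrite ler_pM2l.
have k5 : Nx * Wy <= Ny' * Wx.
  nra.
have hWx0 : 0 < Wx.
  rewrite lt0r hWx andbT; apply/eqP => e.
  have hWy0 : 0 < Wy by lra.
  have hCy0 := hCy' hWy0.
  have k2' : Nxy * Wz * Cy < Cy * (Cz * (1 - W) * W) by nra.
  have k4' : Nxy * Wy < Ny' * W.
    have : Cz * (Nxy * Wy) < Cz * (Ny' * W) by nra.
    by rewrite ltr_pM2l.
  have : Nx * Wy < Ny' * Wx by nra.
  rewrite e mulr0.
  have : 0 <= Nx by move: hNx; rewrite e; nra.
  nra.
split => //; apply: cross; [lra|lra|].
nra.
Qed.

Lemma rho_cross (R : realFieldType) (n : nat) (w c : 'I_n -> R)
  (hw : forall i, 0 <= w i) (hc : forall i, 0 < c i) (y z : seq 'I_n) :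
  uniq y -> uniq z -> rho w c y <= rho w c z ->
  Ws w y * Cs c z <= Ws w z * Cs c y.
Proof.
case: y => [|a y] uy; first by rewrite Ws_nil Cs_nil mul0r mulr0.
case: z => [|b z] uz; first by rewrite Ws_nil Cs_nil mul0r mulr0.
have hCy : 0 < Cs c (a :: y) by apply: Cs_gt0.
have hCz : 0 < Cs c (b :: z) by apply: Cs_gt0.
rewrite /rho (undup_id uy) (undup_id uz).
change (Ws w (a :: y) / Cs c (a :: y) <= Ws w (b :: z) / Cs c (b :: z) ->
  Ws w (a :: y) * Cs c (b :: z) <= Ws w (b :: z) * Cs c (a :: y)).
by rewrite ler_pdivrMr // mulrAC ler_pdivlMr.
Qed.

Theorem proposition2 (R : realFieldType) (n : nat) (E : rel 'I_n)
  (hE : acyclic E) (w c : 'I_n -> R)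
  (hw : forall i, 0 <= w i) (hc : forall i, 0 < c i)
  (x y z : seq 'I_n)
  (hxy : is_search E (x ++ y)) (hxyz : is_search E (x ++ y ++ z))
  (hrho : rho w c y <= rho w c z) :
  ext_le (ext_min (Jplus w c x) (Jplus w c (x ++ y ++ z))) (Jplus w c (x ++ y)).
Proof.
have [uxy _] := hxy. have [uxyz _] := hxyz.
have uy : uniq y by move: uxy; rewrite cat_uniq => /and3P[_ _ ->].
have uyz : uniq (y ++ z) by move: uxyz; rewrite cat_uniq => /and3P[_ _ ->].
have uz : uniq z by move: uyz; rewrite cat_uniq => /and3P[_ _ ->].
have hr := rho_cross hw hc uy uz hrho.
rewrite /Jplus /J.
have eJ : forall s, Jnum w c s = Ns w c s by [].
have eW : forall s, \sum_(v <- s) w v = Ws w s by [].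
rewrite !eJ !eW !Ws_cat !Ns_cat !Cs_cat.
case: (ltP 0 (Ws w x + Ws w y)) => hW; last first.
  by case: ext_min.
rewrite ?hW.
have [hNy1 _] := Ns_bounds hw hc y.
have [_ hNz2] := Ns_bounds hw hc z.
have [hNx1 _] := Ns_bounds hw hc x.
have hWz := Ws_ge0 hw z.
have hW3 : 0 < Ws w x + (Ws w y + Ws w z).
  by apply: (lt_le_trans hW); rewrite addrA lerDl.
rewrite ?hW3.
have H := core (Ws_ge0 hw x) (Ws_ge0 hw y) hWz (Cs_ge0 hc x) (Cs_ge0 hc y)
  (Cs_ge0 hc z) hNy1 hNz2 hNx1 hr
  (fun h => Cs_gt0 hc (Ws_gt0_ne h)) hW.
have eb : (Ns w c x + (Ns w c y + Ns w c z - Ws w y * Cs c z) -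
          Ws w x * (Cs c y + Cs c z)) / (Ws w x + (Ws w y + Ws w z)) =
   (Ns w c x + Ns w c y - Ws w x * Cs c y + Ns w c z -
      (Ws w x + Ws w y) * Cs c z) / (Ws w x + Ws w y + Ws w z).
  by rewrite addrA; congr (_ / _); ring.
rewrite eb.
case: H => [Hb | [hx Ha]].
  case: ifP => _ /=.
    rewrite ge_min; apply/orP; right.
    by rewrite ge_max le_max lexx /= Hb.
  by rewrite ge_max le_max lexx /= Hb.
rewrite hx /= ge_min; apply/orP; left.
by apply: le_max2.
Qed.
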